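(* Let $S$ be a symmetric numerical semigroup minimally generated by $n_1,n_2,n_3,n_4$ which is not a complete intersection. Suppose that $a_1,\dots,a_4,b_1,\dots,b_4$ are integers such that $0<a_i<\alpha_{i+1}$ and $0<b_i<\alpha_{i+2}$ for all $i$, $$\alpha_i=a_i+b_i\quad (i=1,\dots,4),$$ and $$n_1=\alpha_2\alpha_3a_4+a_2b_3b_4,\quad n_2=\alpha_3\alpha_4a_1+a_3b_4b_1,\quad n_3=\alpha_1\alpha_4a_2+a_4b_1b_2,\quad n_4=\alpha_1\alpha_2a_3+a_1b_2b_3.$$ (Such integers always exist for a suitable labeling of the generators, by Bresinsky's theorem.) Then the following are equivalent: 1) every $n_i$ is odd; 2) one of the following holds: (a) all the $\alpha_i$ and all the $a_i$ are odd; (b) there is exactly one index $i_0$ for which $\alpha_{i_0}$ is even, and moreover $a_{i_0}$ and $a_{i_0-1}$ are odd while the other two $a_i$ are even; (c) all the $\alpha_i$ are even and all the $a_i$ are odd.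
   Context: A numerical semigroup is a submonoid $S\subseteq\mathbb{N}$ with $\mathbb{N}\setminus S$ finite. For $S$ minimally generated by $n_1,\dots,n_4$, $\alpha_i$ denotes the least positive integer such that $\alpha_i n_i=\sum_{j\neq i}c_jn_j$ for some non-negative integers $c_j$. Indices are taken modulo 4: for an integer $i$ outside $\{1,\dots,4\}$, $a_i=a_j$, $b_i=b_j$, $\alpha_i=\alpha_j$ where $j\in\{1,\dots,4\}$, $j\equiv i \pmod 4$ (so e.g. $a_0=a_4$). $S$ is symmetric if $F(S)-s\notin S$ for... equivalently, $S$ is symmetric iff for every integer $z$, exactly one of $z$ and $F(S)-z$ lies in $S$, where $F(S)=\max(\mathbb{Z}\setminus S)$ is the Frobenius number. $S$ is a complete intersection if its defining ideal $I_S$ (the kernel of $k[x_1,\dots,x_4]\to k[t]$, $x_i\mapsto t^{n_i}$) is generated by $3$ elements. *)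

(* Defs.v *)
From HB Require Import structures.
From mathcomp Require Import all_boot all_order all_algebra.
Set Implicit Arguments. Unset Strict Implicit. Unset Printing Implicit Defensive.
Import Order.TTheory GRing.Theory Num.Theory.

(* Generators are n : 'I_4 -> nat; paper index i (1..4) corresponds to
   ordinal i-1.  Index arithmetic is modulo 4. *)

Definition sh (i : 'I_4) (k : nat) : 'I_4 :=
  Ordinal (ltn_pmod (i + k) (isT : 0 < 4)).

Definition inS (n : 'I_4 -> nat) (z : nat) : Prop :=
  exists c : 'I_4 -> nat, z = \sum_(j < 4) c j * n j.

Definition inSZ (n : 'I_4 -> nat) (z : int) : Prop :=
  exists c : 'I_4 -> nat, z = Posz (\sum_(j < 4) c j * n j).

Definition numerical_semigroup (n : 'I_4 -> nat) : Prop :=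
  exists N : nat, forall z : nat, N <= z -> inS n z.

Definition minimal_gens (n : 'I_4 -> nat) : Prop :=
  forall i : 'I_4, ~ (exists c : 'I_4 -> nat,
      n i = \sum_(j < 4 | j != i) c j * n j).

Definition alpha_rel (n : 'I_4 -> nat) (i : 'I_4) (m : nat) : Prop :=
  exists c : 'I_4 -> nat, m * n i = \sum_(j < 4 | j != i) c j * n j.

Definition is_alpha (n : 'I_4 -> nat) (al : 'I_4 -> nat) : Prop :=
  forall i : 'I_4, 0 < al i /\ alpha_rel n i (al i) /\
    (forall m : nat, 0 < m -> alpha_rel n i m -> al i <= m).

Definition frobenius (n : 'I_4 -> nat) (F : int) : Prop :=
  ~ inSZ n F /\ (forall z : int, (F < z)%R -> inSZ n z).

Definition symmetric_sg (n : 'I_4 -> nat) : Prop :=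
  exists F : int, frobenius n F /\
    forall z : int, (inSZ n z /\ ~ inSZ n (F - z)%R) \/
                    (~ inSZ n z /\ inSZ n (F - z)%R).

(* The polynomial ring k[x_1,...,x_4], realised as iterated univariate
   polynomials (x_1 innermost, x_4 outermost), and the k-algebra map
   x_i |-> t^{n_i} into k[t]. *)
Definition poly4 (k : fieldType) := {poly {poly {poly {poly k}}}}.

Definition ev1 (k : fieldType) (n : 'I_4 -> nat) (p : {poly k}) : {poly k} :=
  p \Po 'X^(n ord0).
Definition ev2 (k : fieldType) (n : 'I_4 -> nat) (p : {poly {poly k}})
  : {poly k} := (map_poly (ev1 n) p).['X^(n (sh ord0 1))].
Definition ev3 (k : fieldType) (n : 'I_4 -> nat) (p : {poly {poly {poly k}}})
  : {poly k} := (map_poly (ev2 n) p).['X^(n (sh ord0 2))].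
Definition ev4 (k : fieldType) (n : 'I_4 -> nat) (p : poly4 k)
  : {poly k} := (map_poly (ev3 n) p).['X^(n (sh ord0 3))].

Definition complete_intersection (k : fieldType) (n : 'I_4 -> nat) : Prop :=
  exists f1 f2 f3 : poly4 k,
    [/\ ev4 n f1 = 0, ev4 n f2 = 0, ev4 n f3 = 0 &
      forall p : poly4 k, ev4 n p = 0 ->
        exists g1 g2 g3 : poly4 k, p = g1 * f1 + g2 * f2 + g3 * f3]%R.

(* Main.v *)
Require Import Defs.
From HB Require Import structures.
From mathcomp Require Import all_boot all_order all_algebra.
From Stdlib Require Import FunctionalExtensionality.

Definition En (f g : 'I_4 -> bool) (i : 'I_4) : bool :=
  ((f (sh i 1) (+) g (sh i 1)) && (f (sh i 2) (+) g (sh i 2)) && f (sh i 3))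
  (+) (f (sh i 1) && g (sh i 2) && g (sh i 3)).

Definition E4 : seq 'I_4 :=
  [:: @Ordinal 4 0 isT; @Ordinal 4 1 isT; @Ordinal 4 2 isT; @Ordinal 4 3 isT].

Lemma memE4 (i : 'I_4) : i \in E4.
Proof. by case: i => -[|[|[|[|//]]]] Hi; rewrite (bool_irrelevance Hi isT). Qed.


Definition RHSb (f g : 'I_4 -> bool) : bool :=
  [|| all (fun i => (f i (+) g i) && f i) E4,
      has (fun i0 => [&& ~~ (f i0 (+) g i0),
                      all (fun j => (j != i0) ==> (f j (+) g j)) E4,
                      f i0, f (sh i0 3), ~~ f (sh i0 1) & ~~ f (sh i0 2)]) E4
    | all (fun i => ~~ (f i (+) g i) && f i) E4].

Lemma ext4 (f : 'I_4 -> bool) :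
  f = (fun i => nth false [:: f ord0; f (inord 1); f (inord 2); f (inord 3)] i).
Proof.
apply: functional_extensionality => -[[|[|[|[|//]]]] Hi] /=;
  by congr f; apply: val_inj; rewrite /= ?inordK.
Qed.

Lemma key (f g : 'I_4 -> bool) : all (En f g) E4 = RHSb f g.
Proof.
rewrite (ext4 f) (ext4 g).
move: (f ord0) (f (inord 1)) (f (inord 2)) (f (inord 3)).
move: (g ord0) (g (inord 1)) (g (inord 2)) (g (inord 3)).
by do 8 case; vm_compute.
Qed.

Theorem theorem3p2 (k : fieldType) (n al a b : 'I_4 -> nat) :
  numerical_semigroup n ->
  minimal_gens n ->
  symmetric_sg n ->
  ~ complete_intersection k n ->
  is_alpha n al ->
  (forall i : 'I_4, 0 < a i < al (sh i 1)) ->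
  (forall i : 'I_4, 0 < b i < al (sh i 2)) ->
  (forall i : 'I_4, al i = a i + b i) ->
  (forall i : 'I_4, n i = al (sh i 1) * al (sh i 2) * a (sh i 3)
                          + a (sh i 1) * b (sh i 2) * b (sh i 3)) ->
  ((forall i : 'I_4, odd (n i)) <->
   [\/ (forall i : 'I_4, odd (al i) /\ odd (a i)),
       (exists i0 : 'I_4,
          [/\ ~~ odd (al i0),
              (forall j : 'I_4, j != i0 -> odd (al j)),
              odd (a i0) /\ odd (a (sh i0 3)) &
              ~~ odd (a (sh i0 1)) /\ ~~ odd (a (sh i0 2))])
     | (forall i : 'I_4, ~~ odd (al i) /\ odd (a i))]).
Proof.
move=> _ _ _ _ _ _ _ Hal Hn.
have Hodd : forall i, odd (n i) = En (fun i => odd (a i)) (fun i => odd (b i)) i.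
  by move=> i; rewrite /En Hn !Hal !oddD !oddM !oddD.
have Hal' : forall i, odd (al i) = odd (a i) (+) odd (b i).
  by move=> i; rewrite Hal oddD.
have K := key (fun i => odd (a i)) (fun i => odd (b i)).
rewrite /RHSb in K.
split.
- move=> H.
  have : all (En (fun i => odd (a i)) (fun i => odd (b i))) E4.
    by apply/allP => i _; rewrite -Hodd.
  rewrite K => /or3P [h|h|h].
  + apply: Or31 => i; have /andP := allP h i (memE4 i).
    by rewrite Hal'.
  + apply: Or32; case/hasP: h => i0 _ /and5P [h1 h2 h3 h4 /andP [h5 h6]].
    exists i0; rewrite Hal'; split => //.
    move=> j hj; rewrite Hal'; have := allP h2 j (memE4 j).
    by rewrite hj.
  + apply: Or33 => i; have /andP := allP h i (memE4 i).
    by rewrite Hal'.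
- move=> h.
  suff Hall : all (En (fun i => odd (a i)) (fun i => odd (b i))) E4.
    by move=> i; rewrite Hodd; exact: (allP Hall i (memE4 i)).
  rewrite K; apply/or3P; case: h => [h|h|h].
  + apply: Or31; apply/allP => i _ /=; have [] := h i.
    by rewrite Hal' => -> ->.
  + apply: Or32; case: h => i0 [h1 h2 [h3 h4] [h5 h6]].
    apply/hasP; exists i0; first exact: memE4.
    rewrite -Hal'; apply/and5P; split => //; last exact/andP.
    apply/allP => j _; apply/implyP => hj; rewrite -Hal'; exact: h2.
  + apply: Or33; apply/allP => i _ /=; have [] := h i.
    by rewrite Hal' => -> ->.
Qed.
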